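(* Let $A$ be a commutative $K$-algebra, $\mathcal{D}(A)$ its algebra of differential operators, $R$ a subalgebra of $\mathcal{D}(A)$ with $A\subseteq R$, and $R_i=R\cap\mathcal{D}(A)_i$ for $i\geq 0$. If $\mathfrak{a}$ is a nonzero ideal of $R$, then $\mathfrak{a}_0=\mathfrak{a}\cap A$ is a nonzero ideal of $A$ such that $[R_1,\mathfrak{a}_0]\subseteq\mathfrak{a}_0$ and $R\mathfrak{a}_0R\cap A=\mathfrak{a}_0$. Moreover, for an ideal $\mathfrak{a}_0$ of $A$ the condition $[R_1,\mathfrak{a}_0]\subseteq\mathfrak{a}_0$ is equivalent to $[D_R,\mathfrak{a}_0]\subseteq\mathfrak{a}_0$, where $D_R=R_1\cap\mathrm{Der}_K(A)$.
   Context: For a commutative $K$-algebra $A$, $\mathcal{D}(A)=\bigcup_{i\geq0}\mathcal{D}(A)_i\subseteq\mathrm{End}_K(A)$ where $\mathcal{D}(A)_{-1}=0$ and $\mathcal{D}(A)_i=\{u\in\mathrm{End}_K(A)\mid au-ua\in\mathcal{D}(A)_{i-1}\ \forall a\in A\}$; $A$ is identified with $\mathcal{D}(A)_0$ via multiplication operators. $[x,y]=xy-yx$. *)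

(* Defs.v *)
From HB Require Import structures.
From mathcomp Require Import all_boot all_order all_algebra.
Set Implicit Arguments. Unset Strict Implicit. Unset Printing Implicit Defensive.
Import GRing.Theory.
Local Open Scope ring_scope.

Section DiffOps.
Variables (K : fieldType) (A : comAlgType K).

Definition linop (u : A -> A) : Prop :=
  forall (k : K) (x y : A), u (k *: x + y) = k *: u x + u y.

(* identification of A with multiplication operators *)
Definition mulop (a : A) : A -> A := fun x => a * x.

Definition opcomm (u v : A -> A) : A -> A := fun x => u (v x) - v (u x).

(* DiffOrd i u  <->  u \in D(A)_i ; D(A)_{-1} = 0 *)
Fixpoint DiffOrd (i : nat) (u : A -> A) : Prop :=
  match i with
  | O => linop u /\ forall (a x : A), opcomm (mulop a) u x = 0
  | S j => linop u /\ forall a : A, DiffOrd j (opcomm (mulop a) u)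
  end.

Definition diffop (u : A -> A) : Prop := exists i, DiffOrd i u.

Definition derivation (u : A -> A) : Prop :=
  linop u /\ forall x y : A, u (x * y) = u x * y + x * u y.

Definition subalg_DA (R : (A -> A) -> Prop) : Prop :=
  (forall u, R u -> diffop u) /\
  (forall a : A, R (mulop a)) /\
  R (fun x => x) /\
  (forall u v, R u -> R v -> R (fun x => u x + v x)) /\
  (forall (k : K) u, R u -> R (fun x => k *: u x)) /\
  (forall u v, R u -> R v -> R (u \o v)).

Definition ideal_of (R I : (A -> A) -> Prop) : Prop :=
  [/\ (forall u, I u -> R u),
      I (fun _ => 0),
      (forall u v, I u -> I v -> I (fun x => u x + v x)),
      (forall r u, R r -> I u -> I (r \o u)) &
      (forall r u, R r -> I u -> I (u \o r))].

Definition nonzero_op_ideal (I : (A -> A) -> Prop) : Prop :=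
  exists u, I u /\ exists x, u x != 0.

Definition ideal0 (I : (A -> A) -> Prop) : A -> Prop := fun a => I (mulop a).

Definition ideal_A (J : A -> Prop) : Prop :=
  [/\ J 0, (forall x y, J x -> J y -> J (x + y)) & (forall a x, J x -> J (a * x))].

(* [R_1, J] \subseteq J, with R_1 = R \cap D(A)_1 *)
Definition bracket_R1 (R : (A -> A) -> Prop) (J : A -> Prop) : Prop :=
  forall u a, R u -> DiffOrd 1 u -> J a ->
    exists b, J b /\ forall x, opcomm u (mulop a) x = b * x.

(* [D_R, J] \subseteq J, with D_R = R_1 \cap Der_K(A) *)
Definition bracket_DR (R : (A -> A) -> Prop) (J : A -> Prop) : Prop :=
  forall u a, R u -> DiffOrd 1 u -> derivation u -> J a ->
    exists b, J b /\ forall x, opcomm u (mulop a) x = b * x.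

Definition RJR (R : (A -> A) -> Prop) (J : A -> Prop) (u : A -> A) : Prop :=
  exists (n : nat) (r s : 'I_n -> A -> A) (c : 'I_n -> A),
    (forall i, R (r i) /\ J (c i) /\ R (s i)) /\
    forall x, u x = \sum_(i < n) r i (c i * s i x).

End DiffOps.

(* Main.v *)
Require Import Defs.
From HB Require Import structures.
From mathcomp Require Import all_boot all_order all_algebra.
From Stdlib Require Import FunctionalExtensionality Classical.
From mathcomp Require Import ring.
Local Open Scope ring_scope.
Import GRing.Theory.
Set Implicit Arguments. Unset Strict Implicit.

Section Helpers.
Variables (K : fieldType) (A : comAlgType K).

Lemma D0_mul (v : A -> A) : (forall a x, opcomm (mulop a) v x = 0) ->
  forall x, v x = x * v 1.
Proof.
move=> H x; have := H x 1; rewrite /opcomm /mulop mulr1 => /eqP.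
by rewrite subr_eq0 => /eqP ->.
Qed.

Variable R : (A -> A) -> Prop.
Hypothesis HR : subalg_DA R.

Lemma R_mul a : R (mulop a). Proof. by case: HR => _ [] . Qed.

Section Ideal.
Variable I : (A -> A) -> Prop.
Hypothesis HI : ideal_of R I.

Lemma I_add u v : I u -> I v -> I (fun x => u x + v x).
Proof. by case: HI => _ _ H _ _; apply: H. Qed.
Lemma I_l r u : R r -> I u -> I (r \o u).
Proof. by case: HI => _ _ _ H _; apply: H. Qed.
Lemma I_r r u : R r -> I u -> I (u \o r).
Proof. by case: HI => _ _ _ _ H; apply: H. Qed.
Lemma I_0 : I (fun _ => 0).
Proof. by case: HI. Qed.

Lemma I_neg u : I u -> I (fun x => - u x).
Proof.
move=> Iu; have := I_l (R_mul (-1)) Iu.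
have -> : (mulop (-1) \o u) = (fun x => - u x).
  by apply: functional_extensionality => x; rewrite /= /mulop mulN1r.
done.
Qed.

Lemma I_comm a u : I u -> I (opcomm (mulop a) u).
Proof.
move=> Iu; exact: (I_add (I_l (R_mul a) Iu) (I_neg (I_r (R_mul a) Iu))).
Qed.

Lemma I_comm' a u : R u -> I (mulop a) -> I (opcomm u (mulop a)).
Proof.
move=> Ru Ia; exact: (I_add (I_l Ru Ia) (I_neg (I_r Ru Ia))).
Qed.

Lemma I_sum n (f : 'I_n -> A -> A) : (forall i, I (f i)) ->
  I (fun x => \sum_(i < n) f i x).
Proof.
elim: n f => [|n IH] f Hf.
  have -> : (fun x => \sum_(i < 0) f i x) = (fun _ => 0).
    by apply: functional_extensionality => x; rewrite big_ord0.
  exact: I_0.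
have -> : (fun x => \sum_(i < n.+1) f i x) =
   (fun x => (fun y => \sum_(i < n) f (widen_ord (leqnSn n) i) y) x + f ord_max x).
  by apply: functional_extensionality => x; rewrite big_ord_recr.
apply: I_add => //; apply: IH => i; exact: Hf.
Qed.

Lemma I_mulop_eq v : (forall a x, opcomm (mulop a) v x = 0) -> I v ->
  I (mulop (v 1)).
Proof.
move=> H Iv.
have -> : mulop (v 1) = v.
  apply: functional_extensionality => x; rewrite /mulop (D0_mul H x) mulrC //.
done.
Qed.

Lemma find_nonzero i : forall u, I u -> DiffOrd i u -> (exists x, u x != 0) ->
  exists a, I (mulop a) /\ a != 0.
Proof.
elim: i => [|j IH] u Iu /= [lu Hu] [x Hx].
  exists (u 1); split; first exact: I_mulop_eq.
  apply: contra Hx => /eqP H0; by rewrite (D0_mul Hu x) H0 mulr0.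
case: (classic (exists a y, opcomm (mulop a) u y != 0)) => [[a [y Hy]]|Hn].
  apply: (IH _ _ (Hu a)); [exact: I_comm | by exists y].
have Hz : forall a y, opcomm (mulop a) u y = 0.
  move=> a y; apply/eqP; apply/negPn/negP => Hne; apply: Hn; by exists a, y.
exists (u 1); split; first exact: I_mulop_eq.
apply: contra Hx => /eqP H0; by rewrite (D0_mul Hz x) H0 mulr0.
Qed.

End Ideal.

Lemma comm_D0 (u : A -> A) (a : A) : DiffOrd 1 u ->
  forall c x, opcomm (mulop c) (opcomm u (mulop a)) x = 0.
Proof.
move=> [_ H] c x; have [_ H0] := H a; have := H0 c x.
rewrite /opcomm /mulop => E; rewrite -oppr0 -E; ring.
Qed.

End Helpers.


Section Part2.
Variables (K : fieldType) (A : comAlgType K).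

Lemma D1_id (u : A -> A) : DiffOrd 1 u -> forall a x,
  u (a * x) = a * u x - x * (a * u 1 - u a).
Proof.
move=> [_ H] a x; have [_ H0] := H a.
have := D0_mul H0 x; rewrite /opcomm /mulop mulr1 => E; rewrite -E; ring.
Qed.

Lemma D0_of (w : A -> A) b : (forall x, w x = x * b) -> DiffOrd 0 w.
Proof.
move=> Hw; split.
  by move=> k x y; rewrite !Hw mulrDl scalerAl.
by move=> c x; rewrite /opcomm /mulop !Hw; ring.
Qed.

Variable u : A -> A.
Hypothesis Hu : DiffOrd 1 u.
Definition dd := fun x => u x - x * u 1.

Lemma dd_der : derivation dd.
Proof.
have lu : linop u by case: Hu.
split.
  move=> k x y; rewrite /dd lu mulrDl -scalerAl scalerBr.
  by rewrite opprD addrACA.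
move=> x y; rewrite /dd (D1_id Hu); ring.
Qed.

Lemma dd_D1 : DiffOrd 1 dd.
Proof.
have [ld Ld] := dd_der; split => // a.
apply: (@D0_of _ (- dd a)) => x.
by rewrite /opcomm /mulop Ld; ring.
Qed.

Lemma dd_comm a x : opcomm u (mulop a) x = opcomm dd (mulop a) x.
Proof. rewrite /opcomm /mulop /dd; ring. Qed.

End Part2.

Theorem theorem1p8 (K : fieldType) (A : comAlgType K) (R : (A -> A) -> Prop) :
  subalg_DA R ->
  (forall I : (A -> A) -> Prop, ideal_of R I -> nonzero_op_ideal I ->
     [/\ ideal_A (ideal0 I),
         (exists a, ideal0 I a /\ a != 0),
         bracket_R1 R (ideal0 I) &
         (forall y : A, RJR R (ideal0 I) (mulop y) <-> ideal0 I y)])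
  /\
  (forall J : A -> Prop, ideal_A J -> (bracket_R1 R J <-> bracket_DR R J)).
Proof.
move=> HR; split.
  move=> I HI [u [Iu [x Hx]]].
  have Ru : R u by case: HI => H _ _ _ _; apply: H.
  have [_ [_ [_ [_ [_ _]]]]] := HR.
  have [i Di] : diffop u by case: HR => H _; apply: H.
  split.
  - split.
    + rewrite /ideal0.
      have -> : mulop 0 = (fun _ : A => 0 : A).
        by apply: functional_extensionality => z; rewrite /mulop mul0r.
      exact (I_0 HI).
    + move=> a b Ia Ib; rewrite /ideal0 in Ia Ib *.
      have -> : mulop (a + b) = (fun z => mulop a z + mulop b z).
        by apply: functional_extensionality => z; rewrite /mulop mulrDl.
      exact (I_add HI Ia Ib).
    + move=> a b Ib; rewrite /ideal0 in Ib *.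
      have -> : mulop (a * b) = (mulop a \o mulop b).
        by apply: functional_extensionality => z; rewrite /mulop /= mulrA.
      exact (I_l HI (R_mul HR a) Ib).
  - have [a [Ia Ha]] := find_nonzero HR HI Iu Di (ex_intro _ x Hx).
    by exists a.
  - move=> v a Rv Dv Ia; rewrite /ideal0 in Ia *.
    have H0 := comm_D0 a Dv.
    exists (opcomm v (mulop a) 1); split; last first.
      by move=> z; rewrite (D0_mul H0 z) mulrC.
    apply: I_mulop_eq => //; exact (I_comm' HR HI Rv Ia).
  - move=> y; split.
      move=> [n [r [s [c [Hrsc E]]]]].
      rewrite /ideal0.
      have -> : mulop y = (fun z => \sum_(j < n) (r j \o mulop (c j) \o s j) z).
        by apply: functional_extensionality => z; rewrite E.
      refine (I_sum HI _) => j; have [Rr [Ic Rs]] := Hrsc j; rewrite /ideal0 in Ic.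
      exact (I_l HI Rr (I_r HI Rs Ic)).
    move=> Iy; exists 1%N, (fun _ => id), (fun _ => id), (fun _ => y); split.
      by move=> j; split; [|split] => //; case: HR => _ [_ [H _]].
    by move=> z; rewrite big_ord1.
move=> J HJ; split.
  by move=> H v a Rv Dv _ Ja; apply: H.
move=> H v a Rv Dv Ja.
have Rd : R (dd v).
  have [_ [_ [_ [Hadd _]]]] := HR.
  have := Hadd _ _ Rv (R_mul HR (- v 1)).
  have -> : (fun x => v x + mulop (- v 1) x) = dd v.
    by apply: functional_extensionality => z; rewrite /dd /mulop mulNr mulrC.
  done.
have [b [Jb Eb]] := H _ a Rd (dd_D1 Dv) (dd_der Dv) Ja.
by exists b; split => // z; rewrite dd_comm.
Qed.
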